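(* Let $P$ be a finite $(3+1)$-free poset, $(A_1,A_2)$ a pair of chains of $P$, $H$ an unbalanced ladder of $(A_1,A_2)$, and $(A'_1,A'_2)$ the pair obtained by the ladder swap on $H$. Then $\mathbf u_{A_1}\mathbf u_{A_2}\equiv\mathbf u_{A'_1}\mathbf u_{A'_2}\pmod{I^P_H}$.
   Context: $a<_Pb$: strict order; $a\sim_Pb$: incomparable or equal. $\mathcal{U}_P=\mathbb{Z}\langle u_a:a\in P\rangle$. For a chain $C=\{c_k>_P\cdots>_Pc_1\}$, $\mathbf u_C=u_{c_k}\cdots u_{c_1}$. $I^P_H$ is the two-sided ideal generated by $u_cu_a-u_au_c$ ($a<_Pc$) and $u_cu_au_b-u_bu_cu_a$ ($a\sim_Pb$, $b\sim_Pc$, $a<_Pc$). A ladder of $(A_1,A_2)$ is a connected component of the bipartite graph on $A_1\sqcup A_2$ with edges $x$—$y$ ($x\in A_1,y\in A_2$) when $x\sim_Py$; it is unbalanced if $|H\cap A_1|\ne|H\cap A_2|$. The ladder swap on $H$ gives $A'_1=(A_1\setminus H)\cup(H\cap A_2)$ and $A'_2=(A_2\setminus H)\cup(H\cap A_1)$, which are again chains. *)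

(* Defs.v *)
From HB Require Import structures.
From mathcomp Require Import all_boot all_order all_algebra.
Set Implicit Arguments. Unset Strict Implicit. Unset Printing Implicit Defensive.
Import Order.TTheory GRing.Theory Num.Theory.

Local Open Scope order_scope.

Section Defs.
Context {disp : Order.disp_t} {P : finPOrderType disp}.

Definition simP (a b : P) : bool := ~~ (a < b) && ~~ (b < a).

Definition three_one_free : Prop :=
  forall a b c d : P, a < b -> b < c ->
    ~ [&& ~~ (d >=< a), ~~ (d >=< b) & ~~ (d >=< c)].

Definition is_chain (C : {set P}) : Prop :=
  forall x y, x \in C -> y \in C -> x >=< y.

(* Words in the free monoid on {u_a : a in P}; u_C = u_{c_k} ... u_{c_1}
   is the word listing the chain C in decreasing order. *)
Definition uC (C : {set P}) : seq P := sort (fun x y => y <= x) (enum C).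

(* Elements of Z<u_a : a in P> are represented by their coefficient
   functions on words (finitely supported); a monomial w is the indicator. *)
Definition mon (w : seq P) : seq P -> int := fun v => Posz (nat_of_bool (v == w)).

(* The generators of I^P_H, each a binomial  p - q  of words. *)
Definition genH (p q : seq P) : Prop :=
  (exists a c : P, a < c /\ p = [:: c; a] /\ q = [:: a; c]) \/
  (exists a b c : P, [/\ simP a b, simP b c, a < c,
      p = [:: c; a; b] & q = [:: b; c; a]]).

(* A term (k, l, (p, q), r) denotes k * u_l * (u_p - u_q) * u_r.
   Two-sided ideal generated by the genH: all finite Z-combinations. *)
Definition term := (int * seq P * (seq P * seq P) * seq P)%type.

Definition term_coef (t : term) (w : seq P) : int :=
  let: (k, l, (p, q), r) := t in
  (k * (mon (l ++ p ++ r) w - mon (l ++ q ++ r) w))%R.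

Definition in_IH (f : seq P -> int) : Prop :=
  exists ts : seq term,
    (forall t, t \in ts -> genH t.1.2.1 t.1.2.2) /\
    forall w, f w = (\sum_(t <- ts) term_coef t w)%R.

Definition congr_IH (f g : seq P -> int) : Prop :=
  in_IH (fun w => (f w - g w)%R).

(* Bipartite graph on A1 ⊔ A2: vertex (true, x) is x in A1,
   (false, y) is y in A2; edge when x ~_P y. *)
Definition vert (A1 A2 : {set P}) (v : bool * P) : bool :=
  if v.1 then v.2 \in A1 else v.2 \in A2.

Definition ladder_edge (A1 A2 : {set P}) : rel (bool * P) :=
  fun v w => [&& vert A1 A2 v, vert A1 A2 w, v.1 != w.1 & simP v.2 w.2].

Definition is_ladder (A1 A2 : {set P}) (H : {set bool * P}) : Prop :=
  exists2 v, vert A1 A2 v & H = [set w | connect (ladder_edge A1 A2) v w].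

Definition side (H : {set bool * P}) (b : bool) : {set P} :=
  [set x | (b, x) \in H].

Definition unbalanced (H : {set bool * P}) : Prop :=
  #|side H true| != #|side H false|.

Definition swap1 (A1 A2 : {set P}) (H : {set bool * P}) : {set P} :=
  (A1 :\: side H true) :|: side H false.
Definition swap2 (A1 A2 : {set P}) (H : {set bool * P}) : {set P} :=
  (A2 :\: side H false) :|: side H true.

End Defs.

(* Main.v *)
Require Import Defs.
From HB Require Import structures.
From mathcomp Require Import all_boot all_order all_algebra.
Set Implicit Arguments. Unset Strict Implicit. Unset Printing Implicit Defensive.
Import Order.TTheory GRing.Theory Num.Theory.

Section Cg.
Context {disp : Order.disp_t} {P : finPOrderType disp}.
Local Open Scope order_scope.

Definition cg (w w' : seq P) := congr_IH (mon w) (mon w').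

Lemma cg_refl w : cg w w.
Proof. exists [::]; split => // u; by rewrite big_nil subrr. Qed.

Lemma cg_trans w1 w2 w3 : cg w1 w2 -> cg w2 w3 -> cg w1 w3.
Proof.
case=> ts1 [g1 e1] [ts2 [g2 e2]]; exists (ts1 ++ ts2); split.
  by move=> t; rewrite mem_cat => /orP[/g1|/g2].
by move=> u; rewrite big_cat /= -e1 -e2 addrA subrK.
Qed.

Definition negt (t : @term _ P) : @term _ P := ((- t.1.1.1)%R, t.1.1.2, t.1.2, t.2).

Lemma cg_sym w1 w2 : cg w1 w2 -> cg w2 w1.
Proof.
case=> ts [g e]; exists (map negt ts); split.
  by move=> t /mapP[t' /g + ->].
move=> u; rewrite big_map.
have -> : (\sum_(j <- ts) term_coef (negt j) u = - \sum_(j <- ts) term_coef j u)%R.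
  rewrite -sumrN; apply: eq_bigr => -[[[k l] [p q]] r] _ /=.
  by rewrite mulNr.
by rewrite -e opprB.
Qed.

Lemma cg_swap l r (x y : P) : ~~ simP x y -> cg (l ++ x :: y :: r) (l ++ y :: x :: r).
Proof.
rewrite /simP negb_and !negbK => /orP[xy|yx]; last first.
  exists [:: (1%R, l, ([:: x; y], [:: y; x]), r)]; split.
    move=> t; rewrite inE => /eqP -> /=; left; by exists y, x.
  by move=> u; rewrite big_seq1 /= mul1r.
exists [:: ((-1)%R, l, ([:: y; x], [:: x; y]), r)]; split.
  move=> t; rewrite inE => /eqP -> /=; left; by exists x, y.
by move=> u; rewrite big_seq1 /= mulN1r opprB.
Qed.

Lemma cg_three l r (a b c : P) : simP a b -> simP b c -> a < c ->
  cg (l ++ c :: a :: b :: r) (l ++ b :: c :: a :: r).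
Proof.
move=> ab bc ac.
exists [:: (1%R, l, ([:: c; a; b], [:: b; c; a]), r)]; split.
  move=> t; rewrite inE => /eqP -> /=; right; by exists a, b, c.
by move=> u; rewrite big_seq1 /= mul1r.
Qed.

Lemma cg_move1 l r x t : (forall y, y \in t -> ~~ simP x y) ->
  cg (l ++ x :: t ++ r) (l ++ t ++ x :: r).
Proof.
elim: t l => [|y t IH] l H /=; first exact: cg_refl.
apply: cg_trans (cg_swap _ _ (H y (mem_head _ _))) _.
have := IH (l ++ [:: y]) (fun z zt => H z (mem_behead (s:=y::t) zt)).
by rewrite -!catA.
Qed.

Lemma cg_block l r s t : (forall x y, x \in s -> y \in t -> ~~ simP x y) ->
  cg (l ++ s ++ t ++ r) (l ++ t ++ s ++ r).
Proof.
elim: s l r => [|x s IH] l r H /=; first exact: cg_refl.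
have := IH (l ++ [:: x]) r (fun a b a_s bt => H a b (mem_behead (s:=x::s) a_s) bt).
rewrite -!catA /= => h; apply: cg_trans h _.
have := cg_move1 l (s ++ r) (t:=t) (x:=x) (fun y yt => H x y (mem_head _ _) yt).
by rewrite -?catA.
Qed.
End Cg.


Section B.
Context {disp : Order.disp_t} {P : finPOrderType disp}.
Local Open Scope order_scope.
Implicit Types (a b c d x y : P).

Definition gtr : rel P := fun x y => y < x.

Lemma gtr_trans : transitive gtr.
Proof. by move=> y x z /= yx zy; exact: lt_trans zy yx. Qed.

Lemma simPC a b : simP a b = simP b a.
Proof. by rewrite /simP andbC. Qed.

Lemma lt_nsim a b : a < b -> ~~ simP a b.
Proof. by rewrite /simP => ->. Qed.

Lemma lt_nsim' a b : b < a -> ~~ simP a b.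
Proof. by rewrite /simP => ->; rewrite andbF. Qed.

Lemma nsimP a b : ~~ simP a b -> (a < b) || (b < a).
Proof. by rewrite /simP negb_and !negbK. Qed.

Lemma sim_conv a b c d : a < b -> b < c -> simP d a -> simP d c -> simP d b.
Proof.
move=> ab bc; rewrite /simP => /andP[da ad] /andP[dc cd]; apply/andP; split.
  by apply/negP => db; move/negP: dc; apply; exact: lt_trans db bc.
by apply/negP => bd; move/negP: ad; apply; exact: lt_trans ab bd.
Qed.

Lemma sim_ncmp a d : simP d a -> d != a -> ~~ (d >=< a).
Proof.
rewrite /simP => /andP[da ad] nda; rewrite /Order.comparable !le_eqVlt.
rewrite (negbTE da) (negbTE ad) (negbTE nda) eq_sym (negbTE nda) /= ?orbF //=.
Qed.

Lemma tof3 (tof : three_one_free (P:=P)) a b c d : a < b -> b < c ->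
  simP d a -> simP d b -> simP d c -> False.
Proof.
move=> ab bc da db dc.
have nda : d != a by apply/eqP => E; subst; move: db; rewrite /simP ab.
have ndb : d != b by apply/eqP => E; subst; move: dc; rewrite /simP bc.
have ndc : d != c by apply/eqP => E; subst; move: da; rewrite /simP (lt_trans ab bc) andbF.
apply: (tof a b c d ab bc); apply/and3P; split; exact: sim_ncmp.
Qed.

Lemma deg2 (tof : three_one_free (P:=P)) d y y' ys2 b :
  sorted gtr [:: y, y' & ys2] -> simP d y -> b \in ys2 -> ~~ simP d b.
Proof.
move=> s dy bin; apply/negP => db.
have := s; rewrite /= => /andP[y'y s'].
have := order_path_min gtr_trans s' => /allP /(_ b bin) /= by'.
have := tof3 tof by' y'y db (sim_conv by' y'y db dy) dy; exact.
Qed.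

Lemma cross a a' b b' : a' < a -> b' < b -> simP a b' -> simP b a' -> simP a' b'.
Proof.
move=> aa bb; rewrite /simP => /andP[h1 h2] /andP[h3 h4]; apply/andP; split.
  by apply/negP => h; move/negP: h4; apply; exact: lt_trans h bb.
by apply/negP => h; move/negP: h2; apply; exact: lt_trans h aa.
Qed.

Definition minimal (xs ys : seq P) := forall T1 T2 : {set P},
  (forall a b, a \in xs -> b \in ys -> simP a b -> (a \in T1) = (b \in T2)) ->
  (exists2 a, a \in xs & a \in T1) \/ (exists2 b, b \in ys & b \in T2) ->
  {subset xs <= T1} /\ {subset ys <= T2}.

Lemma min_sym xs ys : minimal xs ys -> minimal ys xs.
Proof.
move=> m T1 T2 cl ne.
have [] := m T2 T1.
- by move=> a b ax bx ab; rewrite (cl b a) // simPC.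
- by case: ne; [right|left].
by move=> h1 h2; split.
Qed.

Lemma min_red x y xs1 ys1 u :
  (forall z, z \in xs1 -> z < x) -> (forall z, z \in ys1 -> z < y) ->
  minimal (x :: xs1) (y :: ys1) ->
  (forall b, b \in ys1 -> ~~ simP x b) ->
  (forall a, a \in xs1 -> simP y a -> a = u) -> minimal xs1 ys1.
Proof.
move=> hx hy m nx ny T1 T2 cl ne.
have nex a : a \in xs1 -> (a == x) = false by move/hx/lt_eqF.
have ney b : b \in ys1 -> (b == y) = false by move/hy/lt_eqF.
have [uT|uT] := boolP (u \in T1).
  have [] := m (x |: T1) (y |: T2).
  - move=> a b; rewrite !inE => /orP[/eqP->|ain] /orP[/eqP->|bin] ab.
    + by rewrite !eqxx.
    + by move: (nx b bin); rewrite ab.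
    + by rewrite eqxx (ny a ain) ?uT ?orbT // simPC.
    + by rewrite (nex a ain) (ney b bin) /= (cl a b).
  - case: ne => [[a ain aT]|[b bin bT]]; [left; exists a|right; exists b];
      by rewrite !inE ?ain ?bin ?aT ?bT ?orbT.
  move=> s1 s2; split.
    by move=> a ain; move: (s1 a); rewrite !inE ain nex //=; apply.
  by move=> b bin; move: (s2 b); rewrite !inE bin ney //=; apply.
have [] := m (T1 :\ x) (T2 :\ y).
- move=> a b; rewrite !inE => /orP[/eqP->|ain] /orP[/eqP->|bin] ab.
  + by rewrite !eqxx.
  + by move: (nx b bin); rewrite ab.
  + by rewrite eqxx /= (ny a ain) ?(negbTE uT) ?andbF // simPC.
  + by rewrite (nex a ain) (ney b bin) /= (cl a b).
- case: ne => [[a ain aT]|[b bin bT]]; [left; exists a|right; exists b];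
    by rewrite !inE ?ain ?bin ?aT ?bT ?nex ?ney ?orbT.
by move=> s1 _; move: (s1 x); rewrite !inE eqxx /= => /(_ isT).
Qed.
End B.


Section C.
Context {disp : Order.disp_t} {P : finPOrderType disp}.
Local Open Scope order_scope.
Implicit Types (a b c d x y : P).

Lemma sorted_min x (s : seq P) : sorted gtr (x :: s) -> forall z, z \in s -> z < x.
Proof. by move=> /= /(order_path_min gtr_trans) /allP h z /h. Qed.

Lemma core (tof : three_one_free (P:=P)) (xs : seq P) : forall ys,
  sorted gtr xs -> sorted gtr ys -> minimal xs ys -> size xs != size ys ->
  forall l r, cg (l ++ xs ++ ys ++ r) (l ++ ys ++ xs ++ r).
Proof.
elim: xs => [|x xs1 IH] ys sx sy mi sz l r; first exact: cg_refl.
case: ys sy mi sz => [|y ys1] sy mi sz; first exact: cg_refl.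
have hx := sorted_min sx; have hy := sorted_min sy.
have sx1 : sorted gtr xs1 := path_sorted sx.
have sy1 : sorted gtr ys1 := path_sorted sy.
have nex a : a \in xs1 -> (a == x) = false by move/hx/lt_eqF.
have ney b : b \in ys1 -> (b == y) = false by move/hy/lt_eqF.
have [sxy|nsxy] := boolP (simP x y); last first.
  case/orP: (nsimP nsxy) => [xy|yx].
    have cl : forall a b, a \in x :: xs1 -> b \in y :: ys1 -> simP a b ->
        (a \in set0) = (b \in [set y]).
      move=> a b; rewrite !inE => /orP[/eqP->|ain] /orP[/eqP->|bin] ab.
      + by move: nsxy; rewrite ab.
      + by rewrite (ney b bin).
      + by move: ab; rewrite /simP (lt_trans (hx a ain) xy).
      + by rewrite (ney b bin).
    have [H _] := mi _ _ cl (or_intror (ex_intro2 _ _ y (mem_head _ _) (set11 y))).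
    by move: (H x (mem_head _ _)); rewrite inE.
  have cl : forall a b, a \in x :: xs1 -> b \in y :: ys1 -> simP a b ->
      (a \in [set x]) = (b \in set0).
    move=> a b; rewrite !inE => /orP[/eqP->|ain] /orP[/eqP->|bin] ab.
    + by move: nsxy; rewrite ab.
    + by move: ab; rewrite /simP (lt_trans (hy b bin) yx) andbF.
    + by rewrite (nex a ain).
    + by rewrite (nex a ain).
  have [_ H] := mi _ _ cl (or_introl (ex_intro2 _ _ x (mem_head _ _) (set11 x))).
  by move: (H y (mem_head _ _)); rewrite inE.
have syx : simP y x by rewrite simPC.
pose sX := if xs1 is x' :: _ then simP y x' else false.
pose sY := if ys1 is y' :: _ then simP x y' else false.
have NX a : a \in xs1 -> simP y a -> sX /\ a = head x xs1.
  rewrite /sX; case: (xs1) sx => [|x' xs2] sx' //=.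
  rewrite inE => /orP[/eqP->|ain] ya; first by [].
  by move: (deg2 tof sx' syx ain); rewrite ya.
have NY b : b \in ys1 -> simP x b -> sY /\ b = head y ys1.
  rewrite /sY; case: (ys1) sy => [|y' ys2] sy' //=.
  rewrite inE => /orP[/eqP->|bin] xb; first by [].
  by move: (deg2 tof sy' sxy bin); rewrite xb.
case sXE: sX; case sYE: sY.
-
  move: sXE; rewrite /sX; case E: xs1 => [//|x' xs2] yx'.
  move: sYE; rewrite /sY; case E': ys1 => [//|y' ys2] xy'.
  subst xs1 ys1.
  have x'x : x' < x by apply: hx; rewrite mem_head.
  have y'y : y' < y by apply: hy; rewrite mem_head.
  have hx2 := sorted_min sx1.
  have hy2 := sorted_min sy1.
  have x'y' := cross x'x y'y xy' yx'.
  have x'y : simP x' y by rewrite simPC.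
  have y'x : simP y' x by rewrite simPC.
  have cl : forall a b, a \in [:: x, x' & xs2] -> b \in [:: y, y' & ys2] -> simP a b ->
      (a \in [set x; x']) = (b \in [set y; y']).
    move=> a b; rewrite !inE.
    move=> /orP[/eqP->|/orP[/eqP->|ain]] /orP[/eqP->|/orP[/eqP->|bin]] ab;
      rewrite ?eqxx ?orbT //.
    + by move: (deg2 tof sy sxy bin); rewrite ab.
    + by move: (deg2 tof sy x'y bin); rewrite ab.
    + by move: (deg2 tof sx syx ain); rewrite simPC ab.
    + by move: (deg2 tof sx y'x ain); rewrite simPC ab.
    + by rewrite (lt_eqF (hx2 a ain)) (lt_eqF (lt_trans (hx2 a ain) x'x))
         (lt_eqF (hy2 b bin)) (lt_eqF (lt_trans (hy2 b bin) y'y)).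
  have [H1 H2] := mi _ _ cl (or_introl (ex_intro2 _ _ x (mem_head _ _) (set21 x x'))).
  have e1 : xs2 = [::].
    case E: xs2 => [//|z zs]; have zin : z \in xs2 by rewrite E mem_head.
    move: (H1 z); rewrite E !inE eqxx !orbT => /(_ isT).
    by rewrite (lt_eqF (hx2 z zin)) (lt_eqF (lt_trans (hx2 z zin) x'x)).
  have e2 : ys2 = [::].
    case E: ys2 => [//|z zs]; have zin : z \in ys2 by rewrite E mem_head.
    move: (H2 z); rewrite E !inE eqxx !orbT => /(_ isT).
    by rewrite (lt_eqF (hy2 z zin)) (lt_eqF (lt_trans (hy2 z zin) y'y)).
  by move: sz; rewrite e1 e2.
-
  have nxb : forall b, b \in ys1 -> ~~ simP x b.
    by move=> b bin; apply/negP => xb; case: (NY b bin xb); rewrite sYE.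
  have nyu : forall a, a \in xs1 -> simP y a -> a = head x xs1.
    by move=> a ain ya; case: (NX a ain ya).
  have mi1 := min_red hx hy mi nxb nyu.
  move: sXE; rewrite /sX; case E: xs1 => [//|x' xs2] yx'.
  subst xs1.
  have x'x : x' < x by apply: hx; rewrite mem_head.
  have h1 : cg (l ++ [:: x; x'] ++ xs2 ++ [:: y] ++ ys1 ++ r)
               (l ++ [:: x; x'] ++ [:: y] ++ xs2 ++ ys1 ++ r).
    have := cg_block (l ++ [:: x; x']) (ys1 ++ r) (s := xs2) (t := [:: y]).
    rewrite -!catA; apply => a b ain; rewrite inE => /eqP ->.
    by rewrite simPC; exact (deg2 tof sx syx ain).
  have x'y : simP x' y by rewrite simPC.
  have h2 := cg_three l (xs2 ++ ys1 ++ r) x'y syx x'x.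
  have h3 := IH ys1 sx1 sy1 mi1 sz (l ++ [:: y; x]) r.
  have h4 : cg (l ++ [:: y] ++ [:: x] ++ ys1 ++ (x' :: xs2) ++ r)
               (l ++ [:: y] ++ ys1 ++ [:: x] ++ (x' :: xs2) ++ r).
    have := cg_block (l ++ [:: y]) ((x' :: xs2) ++ r) (s := [:: x]) (t := ys1).
    rewrite -!catA; apply => a b; rewrite inE => /eqP -> bin; exact: nxb.
  rewrite -!catA /= in h1 h2 h3 h4 *.
  exact: cg_trans h1 (cg_trans h2 (cg_trans h3 h4)).
-
  have nya : forall a, a \in xs1 -> ~~ simP y a.
    by move=> a ain; apply/negP => ya; case: (NX a ain ya); rewrite sXE.
  have nxu : forall b, b \in ys1 -> simP x b -> b = head y ys1.
    by move=> b bin xb; case: (NY b bin xb).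
  have mi1 := min_sym (min_red hy hx (min_sym mi) nya nxu).
  move: sYE; rewrite /sY; case E: ys1 => [//|y' ys2] xy'.
  subst ys1.
  have y'y : y' < y by apply: hy; rewrite mem_head.
  have h1 : cg (l ++ [:: x] ++ xs1 ++ [:: y] ++ (y' :: ys2) ++ r)
               (l ++ [:: x] ++ [:: y] ++ xs1 ++ (y' :: ys2) ++ r).
    have := cg_block (l ++ [:: x]) ((y' :: ys2) ++ r) (s := xs1) (t := [:: y]).
    rewrite -!catA; apply => a b ain; rewrite inE => /eqP ->.
    by rewrite simPC; exact: nya.
  have h2 := IH (y' :: ys2) sx1 sy1 mi1 sz (l ++ [:: x; y]) r.
  have y'x : simP y' x by rewrite simPC.
  have h3 := cg_sym (cg_three l (ys2 ++ xs1 ++ r) y'x sxy y'y).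
  have h4 : cg (l ++ [:: y; y'] ++ [:: x] ++ ys2 ++ xs1 ++ r)
               (l ++ [:: y; y'] ++ ys2 ++ [:: x] ++ xs1 ++ r).
    have := cg_block (l ++ [:: y; y']) (xs1 ++ r) (s := [:: x]) (t := ys2).
    rewrite -!catA; apply => a b; rewrite inE => /eqP -> bin.
    exact (deg2 tof sy sxy bin).
  rewrite -!catA /= in h1 h2 h3 h4 *.
  exact: cg_trans h1 (cg_trans h2 (cg_trans h3 h4)).
-
  have cl : forall a b, a \in x :: xs1 -> b \in y :: ys1 -> simP a b ->
      (a \in [set x]) = (b \in [set y]).
    move=> a b; rewrite !inE => /orP[/eqP->|ain] /orP[/eqP->|bin] ab.
    + by rewrite !eqxx.
    + by case: (NY b bin ab); rewrite sYE.
    + by case: (NX a ain); rewrite ?sXE // simPC.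
    + by rewrite (nex a ain) (ney b bin).
  have [H1 H2] := mi _ _ cl (or_introl (ex_intro2 _ _ x (mem_head _ _) (set11 x))).
  have e1 : xs1 = [::].
    case E: xs1 => [//|z zs]; move: (H1 z) (nex z); rewrite E !inE eqxx orbT.
    by move=> /(_ isT) -> /(_ isT).
  have e2 : ys1 = [::].
    case E: ys1 => [//|z zs]; move: (H2 z) (ney z); rewrite E !inE eqxx orbT.
    by move=> /(_ isT) -> /(_ isT).
  by move: sz; rewrite e1 e2.
Qed.
End C.


Lemma comp_const (T : finType) (e : rel T) (esy : symmetric e) v (Q : pred T) :
  (forall x y, connect e v x -> connect e v y -> e x y -> Q x = Q y) ->
  forall w, connect e v w -> Q w = Q v.
Proof.
move=> h w vw.
have csym := sym_connect_sym esy.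
pose Q' := [pred u | connect e v u ==> (Q u == Q v)].
have cl : closed e Q'.
  move=> x y xy; rewrite !inE /=.
  have eq1 : connect e v x = connect e v y by apply: same_connect1r.
  rewrite -eq1; case vx: (connect e v x) => //=.
  have vy : connect e v y by rewrite -eq1.
  by rewrite (h x y vx vy xy).
have := closed_connect cl vw; rewrite !inE /= connect0 eqxx vw /= => /esym /eqP.
done.
Qed.

Section D.
Context {disp : Order.disp_t} {P : finPOrderType disp}.
Local Open Scope order_scope.
Implicit Types (a b c d x y z : P).

Lemma sorted_ge_gtr (s : seq P) : sorted (fun x y => y <= x) s -> uniq s -> sorted gtr s.
Proof.
rewrite (sorted_pairwise (leT := fun x y : P => y <= x)); last first.
  by move=> a b c ba cb; exact: le_trans cb ba.
move=> pw us; rewrite (sorted_pairwise gtr_trans).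
elim: s pw us => //= x s IH /andP[/allP ax pw] /andP[xs us].
rewrite IH // andbT; apply/allP => y ys /=.
rewrite /gtr lt_neqAle ax // andbT; apply/eqP => E; subst; by rewrite ys in xs.
Qed.

Lemma uC_sorted (C : {set P}) : is_chain C -> sorted gtr (uC C).
Proof.
move=> ch; apply: sorted_ge_gtr; last by rewrite sort_uniq enum_uniq.
apply: (sort_sorted_in (P := mem C)); last by apply/allP => x; rewrite mem_enum.
move=> x y xC yC /=; have := ch x y xC yC; rewrite /Order.comparable orbC //.
Qed.

Lemma uC_mem (C : {set P}) : uC C =i C.
Proof. by move=> x; rewrite mem_sort mem_enum. Qed.

Lemma uC_eq (C : {set P}) s : is_chain C -> sorted gtr s -> s =i C -> uC C = s.
Proof.
move=> ch ss sC; apply: (irr_sorted_eq gtr_trans) => //.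
- by move=> x; rewrite /gtr ltxx.
- exact: uC_sorted.
- by move=> x; rewrite uC_mem sC.
Qed.

Lemma sorted_cat3 (s1 s2 s3 : seq P) :
  sorted gtr s1 -> sorted gtr s2 -> sorted gtr s3 ->
  (forall x y, x \in s1 -> y \in s2 -> y < x) ->
  (forall x y, x \in s2 -> y \in s3 -> y < x) ->
  (forall x y, x \in s1 -> y \in s3 -> y < x) -> sorted gtr (s1 ++ s2 ++ s3).
Proof.
rewrite !(sorted_pairwise gtr_trans) => p1 p2 p3 h12 h23 h13.
rewrite !pairwise_cat p1 p2 p3 !andbT.
apply/andP; split.
  apply/allrelP => x y xs; rewrite mem_cat => /orP[]; [exact: h12|exact: h13].
by apply/allrelP => x y; [exact: h23].
Qed.

Lemma ns_cmp x y : ~~ simP x y -> x >=< y.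
Proof. by move/nsimP/orP => -[] h; rewrite /Order.comparable (ltW h) ?orbT. Qed.

Lemma chain_ns (A : {set P}) x y : is_chain A -> x \in A -> y \in A -> x != y -> ~~ simP x y.
Proof.
move=> ch xA yA nxy; have := ch x y xA yA.
rewrite /Order.comparable !le_eqVlt (negbTE nxy) eq_sym (negbTE nxy) /=.
by case/orP => h; [exact: lt_nsim|exact: lt_nsim'].
Qed.

Lemma side_same a b z : simP a b -> ~~ simP z a -> ~~ simP z b -> (a < z) = (b < z).
Proof.
move=> ab /nsimP za /nsimP zb; apply/idP/idP => h.
  case/orP: zb => // zb; move: ab; rewrite /simP (lt_trans h zb) //.
case/orP: za => // za; move: ab; rewrite /simP (lt_trans h za) andbF //.
Qed.

End D.

Section D2.
Context {disp : Order.disp_t} {P : finPOrderType disp}.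
Local Open Scope order_scope.

Lemma decomp (C M Ab Be : {set P}) : is_chain C -> is_chain M -> is_chain Ab -> is_chain Be ->
  (forall x y, x \in Ab -> y \in M -> y < x) -> (forall x y, x \in M -> y \in Be -> y < x) ->
  (forall x y, x \in Ab -> y \in Be -> y < x) ->
  (forall z, (z \in C) = [|| z \in Ab, z \in M | z \in Be]) ->
  uC C = uC Ab ++ uC M ++ uC Be.
Proof.
move=> cC cM cA cB h1 h2 h3 hm; apply: uC_eq cC _ _.
  apply: sorted_cat3; rewrite ?uC_sorted // => x y; rewrite !uC_mem.
  - exact: h1.
  - exact: h2.
  - exact: h3.
by move=> z; rewrite !mem_cat !uC_mem hm.
Qed.

Lemma sub_chain (A B : {set P}) : is_chain A -> {subset B <= A} -> is_chain B.
Proof. by move=> c s x y /s xA /s yA; exact: c. Qed.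
End D2.


Unset Implicit Arguments.
Local Open Scope order_scope.
Theorem mainTheorem19 (disp : Order.disp_t) (P : finPOrderType disp)
    (A1 A2 : {set P}) (H : {set bool * P}) :
  three_one_free (P := P) ->
  is_chain A1 -> is_chain A2 ->
  is_ladder A1 A2 H -> unbalanced H ->
  congr_IH (mon (uC A1 ++ uC A2))
           (mon (uC (swap1 A1 A2 H) ++ uC (swap2 A1 A2 H))).
Proof.
move=> tof c1 c2 [v vv ->] unb.
set e := ladder_edge A1 A2.
have esy : symmetric e.
  move=> x y; rewrite /e /ladder_edge eq_sym simPC.
  by case: (vert A1 A2 x); case: (vert A1 A2 y).
have csym := sym_connect_sym esy.
have Fvert w : connect e v w -> vert A1 A2 w.
  move=> vw; have cl : closed e (vert A1 A2).
    move=> x y; rewrite /e /ladder_edge => /and4P[vx vy _ _]; by rewrite -!topredE /= vx vy.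
  by have := closed_connect cl vw; rewrite -!topredE /= vv => <-.
have Fstep w w' : connect e v w -> e w w' -> connect e v w'.
  by move=> vw ww'; apply: connect_trans vw (connect1 ww').
rewrite /swap1 /swap2 /unbalanced in unb *.
set S1 := side _ true; set S2 := side _ false.
have inS1 x : (x \in S1) = connect e v (true, x) by rewrite !inE.
have inS2 x : (x \in S2) = connect e v (false, x) by rewrite !inE.
have S1A x : x \in S1 -> x \in A1 by rewrite inS1 => /Fvert.
have S2A x : x \in S2 -> x \in A2 by rewrite inS2 => /Fvert.
have ch1 : is_chain S1 by move=> x y /S1A xA /S1A yA; exact: c1.
have ch2 : is_chain S2 by move=> x y /S2A xA /S2A yA; exact: c2.
have H4a z y : z \in A1 -> z \notin S1 -> y \in S2 -> ~~ simP z y.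
  move=> zA zS yS; apply/negP => zy; move/negP: zS; apply.
  rewrite inS1; apply: Fstep (_ : connect e v (false, y)) _; first by rewrite -inS2.
  by rewrite /e /ladder_edge /vert /= zA (S2A _ yS) simPC zy.
have H4b z x : z \in A2 -> z \notin S2 -> x \in S1 -> ~~ simP z x.
  move=> zA zS xS; apply/negP => zx; move/negP: zS; apply.
  rewrite inS2; apply: Fstep (_ : connect e v (true, x)) _; first by rewrite -inS1.
  by rewrite /e /ladder_edge /vert /= zA (S1A _ xS) simPC zx.
have ns1 z w : z \in A1 -> z \notin S1 -> connect e v w -> ~~ simP z w.2.
  move=> zA zS; case: w => [[] t] vw /=.
    apply: (chain_ns c1) => //; first by apply: S1A; rewrite inS1.
    by apply: contraNneq zS => ->; rewrite inS1.
  by apply: H4a; rewrite // inS2.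
have ns2 z w : z \in A2 -> z \notin S2 -> connect e v w -> ~~ simP z w.2.
  move=> zA zS; case: w => [[] t] vw /=.
    by apply: H4b; rewrite // inS1.
  apply: (chain_ns c2) => //; first by apply: S2A; rewrite inS2.
  by apply: contraNneq zS => ->; rewrite inS2.
have Sep z : (forall w, connect e v w -> ~~ simP z w.2) ->
    forall w, connect e v w -> (w.2 < z) = (v.2 < z).
  move=> hz; apply: (comp_const esy (Q := fun w : bool * P => w.2 < z)) => x y vx vy xy.
  apply: side_same; [|exact: hz|exact: hz].
  by move: xy; rewrite /e /ladder_edge => /and4P[_ _ _ ->].
have vH : connect e v v := connect0 e v.
pose Ab1 := [set z in A1 | (z \notin S1) && (v.2 < z)].
pose Be1 := [set z in A1 | (z \notin S1) && (z < v.2)].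
pose Ab2 := [set z in A2 | (z \notin S2) && (v.2 < z)].
pose Be2 := [set z in A2 | (z \notin S2) && (z < v.2)].
have iA1 z : (z \in Ab1) = [&& z \in A1, z \notin S1 & v.2 < z] by rewrite /Ab1 inE.
have iB1 z : (z \in Be1) = [&& z \in A1, z \notin S1 & z < v.2] by rewrite /Be1 inE.
have iA2 z : (z \in Ab2) = [&& z \in A2, z \notin S2 & v.2 < z] by rewrite /Ab2 inE.
have iB2 z : (z \in Be2) = [&& z \in A2, z \notin S2 & z < v.2] by rewrite /Be2 inE.
have abv1 z w : z \in Ab1 -> connect e v w -> w.2 < z.
  rewrite iA1 => /and3P[zA zS vz] vw.
  by rewrite (Sep z (fun w => ns1 z w zA zS) w vw).
have abv2 z w : z \in Ab2 -> connect e v w -> w.2 < z.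
  rewrite iA2 => /and3P[zA zS vz] vw.
  by rewrite (Sep z (fun w => ns2 z w zA zS) w vw).
have blw1 z w : z \in Be1 -> connect e v w -> z < w.2.
  rewrite iB1 => /and3P[zA zS zv] vw.
  case/orP: (nsimP (ns1 z w zA zS vw)) => // wz.
  move: wz; rewrite (Sep z (fun w => ns1 z w zA zS) w vw) => vz.
  by have := lt_trans zv vz; rewrite ltxx.
have blw2 z w : z \in Be2 -> connect e v w -> z < w.2.
  rewrite iB2 => /and3P[zA zS zv] vw.
  case/orP: (nsimP (ns2 z w zA zS vw)) => // wz.
  move: wz; rewrite (Sep z (fun w => ns2 z w zA zS) w vw) => vz.
  by have := lt_trans zv vz; rewrite ltxx.
have cA1 : is_chain Ab1 by apply: sub_chain c1 _ => z; rewrite iA1 => /andP[].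
have cB1 : is_chain Be1 by apply: sub_chain c1 _ => z; rewrite iB1 => /andP[].
have cA2 : is_chain Ab2 by apply: sub_chain c2 _ => z; rewrite iA2 => /andP[].
have cB2 : is_chain Be2 by apply: sub_chain c2 _ => z; rewrite iB2 => /andP[].
have AB1 x y : x \in Ab1 -> y \in Be1 -> y < x.
  by move=> xa yb; apply: lt_trans (blw1 _ _ yb vH) (abv1 _ _ xa vH).
have AB2 x y : x \in Ab2 -> y \in Be2 -> y < x.
  by move=> xa yb; apply: lt_trans (blw2 _ _ yb vH) (abv2 _ _ xa vH).
have m1 z : z \in A1 -> z \notin S1 -> (z \in Ab1) || (z \in Be1).
  move=> zA zS; rewrite iA1 iB1 zA zS /= orbC.
  exact: (nsimP (ns1 z v zA zS vH)).
have m2 z : z \in A2 -> z \notin S2 -> (z \in Ab2) || (z \in Be2).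
  move=> zA zS; rewrite iA2 iB2 zA zS /= orbC.
  exact: (nsimP (ns2 z v zA zS vH)).
have E1 : uC A1 = uC Ab1 ++ uC S1 ++ uC Be1.
  apply: decomp => //.
  - by move=> x y xa; rewrite inS1 => /(abv1 _ _ xa).
  - by move=> x y; rewrite inS1 => vx /(blw1 _ _)/(_ vx).
  - move=> z; apply/idP/idP => [zA|].
      case zS: (z \in S1); first by rewrite orbT.
      by case/orP: (m1 z zA (negbT zS)) => ->; rewrite ?orbT.
    by case/or3P => [|/S1A|]; rewrite ?iA1 ?iB1 => // /andP[].
have E2 : uC A2 = uC Ab2 ++ uC S2 ++ uC Be2.
  apply: decomp => //.
  - by move=> x y xa; rewrite inS2 => /(abv2 _ _ xa).
  - by move=> x y; rewrite inS2 => vx /(blw2 _ _)/(_ vx).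
  - move=> z; apply/idP/idP => [zA|].
      case zS: (z \in S2); first by rewrite orbT.
      by case/orP: (m2 z zA (negbT zS)) => ->; rewrite ?orbT.
    by case/or3P => [|/S2A|]; rewrite ?iA2 ?iB2 => // /andP[].
have E3 : uC ((A1 :\: S1) :|: S2) = uC Ab1 ++ uC S2 ++ uC Be1.
  apply: decomp => //.
  - move=> x y; rewrite !in_setU !in_setD.
    move=> /orP[/andP[xS xA]|xS] /orP[/andP[yS yA]|yS].
    + exact: c1.
    + exact: ns_cmp (H4a _ _ xA xS yS).
    + by rewrite /Order.comparable orbC; exact: ns_cmp (H4a _ _ yA yS xS).
    + exact: ch2.
  - by move=> x y xa; rewrite inS2 => /(abv1 _ _ xa).
  - by move=> x y; rewrite inS2 => vx /(blw1 _ _)/(_ vx).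
  - move=> z; rewrite in_setU in_setD; apply/idP/idP => [/orP[/andP[zS zA]|->]|].
    + by case/orP: (m1 z zA zS) => ->; rewrite ?orbT.
    + by rewrite orbT.
    by case/or3P => [|->|]; rewrite ?iA1 ?iB1 ?orbT // => /and3P[-> -> _].
have E4 : uC ((A2 :\: S2) :|: S1) = uC Ab2 ++ uC S1 ++ uC Be2.
  apply: decomp => //.
  - move=> x y; rewrite !in_setU !in_setD.
    move=> /orP[/andP[xS xA]|xS] /orP[/andP[yS yA]|yS].
    + exact: c2.
    + exact: ns_cmp (H4b _ _ xA xS yS).
    + by rewrite /Order.comparable orbC; exact: ns_cmp (H4b _ _ yA yS xS).
    + exact: ch1.
  - by move=> x y xa; rewrite inS1 => /(abv2 _ _ xa).
  - by move=> x y; rewrite inS1 => vx /(blw2 _ _)/(_ vx).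
  - move=> z; rewrite in_setU in_setD; apply/idP/idP => [/orP[/andP[zS zA]|->]|].
    + by case/orP: (m2 z zA zS) => ->; rewrite ?orbT.
    + by rewrite orbT.
    by case/or3P => [|->|]; rewrite ?iA2 ?iB2 ?orbT // => /and3P[-> -> _].
rewrite -/e -/S1 -/S2 in unb.
have mi : minimal (uC S1) (uC S2).
  move=> T1 T2 cl ne.
  pose Q := fun w : bool * P => if w.1 then w.2 \in T1 else w.2 \in T2.
  have QC := comp_const esy (Q := Q).
  have Qe : forall w, connect e v w -> Q w = Q v.
    apply: QC => -[[] x] [[] y] vx vy /and4P[_ _ /= nb xy] //; rewrite /Q /=.
      by apply: cl; rewrite ?uC_mem ?inS1 ?inS2.
    by rewrite -(cl y x) ?uC_mem ?inS1 ?inS2 // simPC.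
  have Qv : Q v.
    case: ne => [[a ain aT]|[b bin bT]].
      by rewrite -(Qe (true, a)) //; move: ain; rewrite uC_mem inS1.
    by rewrite -(Qe (false, b)) //; move: bin; rewrite uC_mem inS2.
  split => x; rewrite uC_mem.
    by rewrite inS1 => /Qe; rewrite Qv.
  by rewrite inS2 => /Qe; rewrite Qv.
have sz : size (uC S1) != size (uC S2) by rewrite /uC !size_sort -!cardE.
rewrite E1 E2 E3 E4; change (cg ((uC Ab1 ++ uC S1 ++ uC Be1) ++ (uC Ab2 ++ uC S2 ++ uC Be2))
  ((uC Ab1 ++ uC S2 ++ uC Be1) ++ (uC Ab2 ++ uC S1 ++ uC Be2))).
have h1 := cg_block (uC Ab1 ++ uC S1) (uC Be2) (s := uC Be1 ++ uC Ab2) (t := uC S2).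
have h2 := core tof (uC_sorted ch1) (uC_sorted ch2) mi sz (uC Ab1) (uC Be1 ++ uC Ab2 ++ uC Be2).
have h3 := cg_block (uC Ab1 ++ uC S2) (uC Be2) (s := uC S1) (t := uC Be1 ++ uC Ab2).
rewrite -!catA in h1 h2 h3 *.
apply: cg_trans (h1 _) (cg_trans h2 (h3 _)).
- move=> x y; rewrite mem_cat !uC_mem => /orP[xb|xa] yS.
    by move: xb; rewrite iB1 => /and3P[xA xS _]; exact: H4a.
  move: xa; rewrite iA2 => /and3P[xA xS _]; apply: (chain_ns c2) => //; first exact: S2A.
  by apply: contraNneq xS => ->.
- move=> x y; rewrite mem_cat !uC_mem => xS /orP[yb|ya].
    move: yb; rewrite iB1 => /and3P[yA yS _]; apply: (chain_ns c1) => //; first exact: S1A.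
    by apply: contraNneq yS => <-.
  by move: ya; rewrite iA2 => /and3P[yA yS _]; rewrite simPC; exact: H4b.
Qed.
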